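(* Let $\mathbf{C}$ be a category of $\mathbf{FI}$ type. The set of character polynomials on $\mathbf{C}$ is closed under pointwise products (so forms an algebra), and if $P,Q$ are character polynomials of respective degrees $\leq c_1$ and $\leq c_2$, then $P\cdot Q$ is a character polynomial of degree $\leq c_1+c_2$.
   Context: A category $\mathbf{C}$ is of $\mathbf{FI}$ type if: (1) all Hom-sets are finite; (2) every morphism is a monomorphism and every endomorphism is an isomorphism; (3) for all objects $c,d$ the group $G_d=\mathrm{Aut}_{\mathbf{C}}(d)$ acts transitively on $\mathrm{Hom}_{\mathbf{C}}(c,d)$; (4) for every $d$ only finitely many isomorphism classes of $c$ have $\mathrm{Hom}(c,d)\neq\emptyset$; (5) every pair $c_1\to d\leftarrow c_2$ has a pullback, and every pair $f_i:p\to c_i$ has a weak push-out, i.e. a commutative pullback square $g_i:c_i\to d$ such that for every other pullback square $h_i:c_i\to z$ with $h_1f_1=h_2f_2$ there is a unique $h:d\to z$ with $hg_i=h_i$. Write $c\leq d$ if $\mathrm{Hom}(c,d)\neq\emptyset$. Binomial set: $\binom{d}{c}=\mathrm{Hom}(c,d)/G_c$. For a conjugacy class $\mu\subseteq G_c$ (write $|\mu|=c$), $\binom{X}{\mu}$ is the class function on every $G_d$ given by $\sigma\mapsto\#\{[f]\in\binom{d}{c}:\exists\psi\in\mu,\ \sigma f=f\psi\}$. A character polynomial is a $\mathbb{C}$-linear combination of such functions; it has degree $\leq d$ if every $\binom{X}{\mu}$ appearing nontrivially has $|\mu|\leq d$. Write $d\geq c_1+c_2$ if $w\leq d$ for every weak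 push-out object $w$ of any pair $p\to c_1$, $p\to c_2$; degree $\leq c_1+c_2$ means degree $\leq d$ for every $d\geq c_1+c_2$. *)

(* Defs.v *)
From HB Require Import structures.
From mathcomp Require Import all_boot all_order all_algebra.
From mathcomp Require Import complex.
From mathcomp Require Import Rstruct.
Set Implicit Arguments.
Unset Strict Implicit.
Unset Printing Implicit Defensive.
Import Order.TTheory GRing.Theory Num.Theory.

Definition CC : Type := complex Rdefinitions.R.

Record Cat := {
  ob : Type;
  hom : ob -> ob -> finType;
  idm : forall c, hom c c;
  comp : forall a b c, hom b c -> hom a b -> hom a c;
  comp_assoc : forall a b c d (h : hom c d) (g : hom b c) (f : hom a b),
      comp h (comp g f) = comp (comp h g) f;
  comp_id_l : forall a b (f : hom a b), comp (idm b) f = f;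
  comp_id_r : forall a b (f : hom a b), comp f (idm a) = f
}.
Arguments idm {_} _.
Arguments comp {_ _ _ _} _ _.

Section FI.
Variable C : Cat.

Definition isob {a b : ob C} (f : hom a b) : bool :=
  [exists g : hom b a, (comp g f == idm a) && (comp f g == idm b)].

Definition mono {c d : ob C} (f : hom c d) : Prop :=
  forall a (x y : hom a c), comp f x = comp f y -> x = y.

Definition ob_le (c d : ob C) : Prop := inhabited (hom c d).

Definition ob_iso (c d : ob C) : Prop := exists f : hom c d, isob f.

Definition is_pullback {p c1 c2 d : ob C}
  (f1 : hom p c1) (f2 : hom p c2) (g1 : hom c1 d) (g2 : hom c2 d) : Prop :=
  comp g1 f1 = comp g2 f2 /\
  forall q (h1 : hom q c1) (h2 : hom q c2), comp g1 h1 = comp g2 h2 ->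
    exists h : hom q p, [/\ comp f1 h = h1, comp f2 h = h2 &
      forall h' : hom q p, comp f1 h' = h1 -> comp f2 h' = h2 -> h' = h].

Definition is_weak_pushout {p c1 c2 d : ob C}
  (f1 : hom p c1) (f2 : hom p c2) (g1 : hom c1 d) (g2 : hom c2 d) : Prop :=
  is_pullback f1 f2 g1 g2 /\
  forall z (h1 : hom c1 z) (h2 : hom c2 z), is_pullback f1 f2 h1 h2 ->
    exists h : hom d z, [/\ comp h g1 = h1, comp h g2 = h2 &
      forall h' : hom d z, comp h' g1 = h1 -> comp h' g2 = h2 -> h' = h].

Definition FI_type : Prop :=
  (* (1) finite Hom-sets: built into [Cat] (hom is a finType) *)
  (forall c d (f : hom c d), mono f) /\
  (forall d (f : hom d d), isob f) /\
  (forall c d (f g : hom c d), exists s : hom d d, isob s /\ g = comp s f) /\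
  (forall d, exists n (e : 'I_n -> ob C),
      forall c, ob_le c d -> exists i, ob_iso c (e i)) /\
  (forall c1 c2 d (g1 : hom c1 d) (g2 : hom c2 d),
      exists p (f1 : hom p c1) (f2 : hom p c2), is_pullback f1 f2 g1 g2) /\
  (forall p c1 c2 (f1 : hom p c1) (f2 : hom p c2),
      exists d (g1 : hom c1 d) (g2 : hom c2 d), is_weak_pushout f1 f2 g1 g2).

Definition in_class {c : ob C} (psi0 psi : hom c c) : bool :=
  [exists g : hom c c, isob g && (comp psi g == comp g psi0)].

Definition orbit {c d : ob C} (f : hom c d) : {set hom c d} :=
  [set comp f g | g in [pred g : hom c c | isob g]].

(* binom(X, mu)(sigma) for mu the conjugacy class of psi0 in G_c and
   sigma in G_d: number of [f] in Hom(c,d)/G_c with sigma f = f psi,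
   for some psi in mu. *)
Definition binomX {c : ob C} (psi0 : hom c c) (d : ob C) (sigma : hom d d)
  : nat :=
  #|[set orbit f | f in [pred f : hom c d |
       [exists psi : hom c c, in_class psi0 psi && (comp sigma f == comp f psi)]]]|.

(* A family of functions on the groups G_d (values off G_d are irrelevant). *)
Definition cfam := forall d : ob C, hom d d -> CC.

Definition char_poly_with (ok : ob C -> Prop) (P : cfam) : Prop :=
  exists n (a : 'I_n -> CC) (cs : 'I_n -> ob C) (psi : forall i, hom (cs i) (cs i)),
    [/\ forall i, isob (psi i),
        forall i, (a i != 0)%R -> ok (cs i) &
        forall d (sigma : hom d d), isob sigma ->
          P d sigma = (\sum_(i < n) a i * (binomX (psi i) sigma)%:R)%R].

Definition is_char_poly (P : cfam) : Prop := char_poly_with (fun _ => True) P.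

Definition deg_le (P : cfam) (d : ob C) : Prop :=
  char_poly_with (fun c => ob_le c d) P.

Definition ob_ge_sum (d c1 c2 : ob C) : Prop :=
  forall p (f1 : hom p c1) (f2 : hom p c2) w (g1 : hom c1 w) (g2 : hom c2 w),
    is_weak_pushout f1 f2 g1 g2 -> ob_le w d.

Definition deg_le_sum (P : cfam) (c1 c2 : ob C) : Prop :=
  forall d, ob_ge_sum d c1 c2 -> deg_le P d.

Definition cfam_mul (P Q : cfam) : cfam := fun d sigma => (P d sigma * Q d sigma)%R.

End FI.

(* Main.v *)
Require Import Defs.
From HB Require Import structures.
From mathcomp Require Import all_boot all_order all_algebra.
From mathcomp Require Import complex Rstruct.
From Stdlib Require Import Classical IndefiniteDescription.
Set Implicit Arguments.
Unset Strict Implicit.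
Unset Printing Implicit Defensive.
Import Order.TTheory GRing.Theory Num.Theory.

Lemma emi (P : Prop) : {P} + {~ P}.
Proof.
have H : exists b : bool, if b then P else ~ P.
  by case: (classic P) => h; [exists true | exists false].
have [[] hb] := constructive_indefinite_description _ H; [left | right]; exact: hb.
Qed.

Definition asb (P : Prop) : bool := if emi P then true else false.
Lemma asbP (P : Prop) : reflect P (asb P).
Proof. rewrite /asb; case: emi => h; by constructor. Qed.

Section Basics.
Variable C : Cat.
Local Notation hom := (@Defs.hom C).
Local Notation ob := (@Defs.ob C).
Local Notation comp := (@Defs.comp C _ _ _).
Local Notation idm := (@Defs.idm C).
Hypothesis monoC : forall c d (f : hom c d), mono f.
Hypothesis isoC : forall d (f : hom d d), isob f.

Lemma isobP a b (f : hom a b) : isob f ->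
  exists g : hom b a, comp g f = idm a /\ comp f g = idm b.
Proof. move/existsP=> [g]. move/andP=> [/eqP h1 /eqP h2]. by exists g. Qed.

Lemma isob_idm a : isob (idm a).
Proof. by apply/existsP; exists (idm a); rewrite comp_id_l eqxx. Qed.

Lemma mcancel a b c (f : hom b c) (x y : hom a b) : comp f x = comp f y -> x = y.
Proof. exact: monoC. Qed.

Lemma rcancel a b (k : hom a a) (x y : hom a b) : comp x k = comp y k -> x = y.
Proof.
have [k' [_ h2]] := isobP (isoC k) => e.
by rewrite -(comp_id_r x) -(comp_id_r y) -h2 !comp_assoc e.
Qed.

Lemma pb_mono p c1 c2 d d' (q1 : hom p c1) (q2 : hom p c2)
  (k1 : hom c1 d) (k2 : hom c2 d) (m : hom d d') :
  is_pullback q1 q2 k1 k2 <-> is_pullback q1 q2 (comp m k1) (comp m k2).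
Proof.
split=> [[e H]|[e H]]; split.
- by rewrite -!comp_assoc e.
- move=> q h1 h2; rewrite -!comp_assoc => /monoC; exact: H.
- by apply: (@mcancel _ _ _ m); rewrite !comp_assoc.
- move=> q h1 h2 eh; apply: H; by rewrite -!comp_assoc eh.
Qed.

Lemma pbm1 p c1 c2 d d' (q1 : hom p c1) (q2 : hom p c2)
  (k1 : hom c1 d) (k2 : hom c2 d) (m : hom d d') :
  is_pullback q1 q2 k1 k2 -> is_pullback q1 q2 (comp m k1) (comp m k2).
Proof. exact: (proj1 (pb_mono q1 q2 k1 k2 m)). Qed.

Lemma pbm2 p c1 c2 d d' (q1 : hom p c1) (q2 : hom p c2)
  (k1 : hom c1 d) (k2 : hom c2 d) (m : hom d d') :
  is_pullback q1 q2 (comp m k1) (comp m k2) -> is_pullback q1 q2 k1 k2.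
Proof. exact: (proj2 (pb_mono q1 q2 k1 k2 m)). Qed.

(* pullbacks: uniqueness is automatic *)
Lemma pbI p c1 c2 d (q1 : hom p c1) (q2 : hom p c2)
  (k1 : hom c1 d) (k2 : hom c2 d) :
  comp k1 q1 = comp k2 q2 ->
  (forall q (h1 : hom q c1) (h2 : hom q c2), comp k1 h1 = comp k2 h2 ->
     exists h : hom q p, comp q1 h = h1 /\ comp q2 h = h2) ->
  is_pullback q1 q2 k1 k2.
Proof.
move=> e H; split=> // q h1 h2 /H [h [e1 e2]]; exists h; split=> // h' e1' _.
by apply: (@mcancel _ _ _ q1); rewrite e1 e1'.
Qed.

Lemma pb_iso p p' c1 c2 d (q1 : hom p c1) (q2 : hom p c2)
  (k1 : hom c1 d) (k2 : hom c2 d) (j : hom p' p) (j' : hom p p') :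
  comp j j' = idm p ->
  is_pullback q1 q2 k1 k2 -> is_pullback (comp q1 j) (comp q2 j) k1 k2.
Proof.
move=> ej [e H]; apply: pbI; first by rewrite !comp_assoc e.
move=> q h1 h2 /H [h [e1 e2 _]]; exists (comp j' h).
by rewrite !comp_assoc -(comp_assoc q1) -(comp_assoc q2) ej !comp_id_r.
Qed.


Definition Nset c d (psi : hom c c) (sigma : hom d d) : {set hom c d} :=
  [set f | comp sigma f == comp f psi].

Lemma Nset_conj c d (psi0 psi : hom c c) (sigma : hom d d) :
  in_class psi0 psi -> #|Nset psi sigma| = #|Nset psi0 sigma|.
Proof.
case/existsP=> g /andP[_ /eqP eg].
have [g' [e1 e2]] := isobP (isoC g).
have -> : Nset psi0 sigma = (fun f => comp f g) @: Nset psi sigma.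
  apply/setP=> f; apply/idP/imsetP.
  - rewrite inE => /eqP ef; exists (comp f g'); last first.
      by rewrite /= -comp_assoc e1 comp_id_r.
    rewrite inE; apply/eqP.
    have -> : psi = comp g (comp psi0 g').
      by rewrite comp_assoc -eg -comp_assoc e2 comp_id_r.
    by rewrite !comp_assoc ef -(comp_assoc f g' g) e1 comp_id_r.
  - case=> f0; rewrite inE => /eqP ef ->; rewrite inE.
    by rewrite comp_assoc ef -!comp_assoc eg.
by rewrite card_imset // => x y; apply: rcancel.
Qed.


Lemma card_sumb (T : finType) (A : {set T}) : #|A| = \sum_(x : T) (x \in A : nat).
Proof.
rewrite -sum1_card big_mkcond /=; apply: eq_bigr => x _.
by case: (x \in A).
Qed.

Definition Xset c d (psi0 : hom c c) (sigma : hom d d) : {set hom c d} :=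
  [set f | [exists psi, in_class psi0 psi && (comp sigma f == comp f psi)]].

Lemma Xcard_class c d (psi0 : hom c c) (sigma : hom d d) :
  #|Xset psi0 sigma| = (#|[set psi | in_class psi0 psi]| * #|Nset psi0 sigma|)%N.
Proof.
rewrite -sum_nat_const.
rewrite (eq_bigr (fun psi => #|Nset psi sigma|)); last first.
  by move=> psi; rewrite inE => /Nset_conj ->.
transitivity (\sum_(psi : hom c c) \sum_(f : hom c d)
   ((psi \in [set psi | in_class psi0 psi]) && (f \in Nset psi sigma) : nat)); last first.
  symmetry; rewrite big_mkcond /=; apply: eq_bigr => psi _.
  rewrite card_sumb; case: ifP => h.
    by apply: eq_bigr => f _.
  by rewrite big1.
rewrite exchange_big card_sumb /=; apply: eq_bigr => f _.
rewrite inE.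
case: existsP => [[psi1 /andP[h1 /eqP h2]]|hn].
  rewrite (bigD1 psi1) //= !inE h1 h2 eqxx /=.
  rewrite big1 ?addn0 // => psi hne; case: andP => // -[_].
  rewrite inE h2 => /eqP /monoC e; by rewrite e eqxx in hne.
rewrite big1 // => psi _; case: andP => // -[]; rewrite !inE => h1 h2.
by case: hn; exists psi; rewrite h1 h2.
Qed.


Local Notation orb := (@Defs.orbit C _ _).

Lemma orbitP c d (f0 f : hom c d) :
  reflect (exists g : hom c c, f = comp f0 g) (f \in orb f0).
Proof.
apply: (iffP imsetP) => [[g _ ->]|[g ->]]; first by exists g.
by exists g => //; rewrite inE; apply: isoC.
Qed.

Lemma orbit_self c d (f : hom c d) : f \in orb f.
Proof. by apply/orbitP; exists (idm c); rewrite comp_id_r. Qed.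

Lemma orbit_eq c d (f0 f : hom c d) : f \in orb f0 -> orb f = orb f0.
Proof.
case/orbitP=> g ->; have [g' [e1 e2]] := isobP (isoC g).
apply/setP=> x; apply/orbitP/orbitP => -[h ->].
  by exists (comp g h); rewrite comp_assoc.
exists (comp g' h); rewrite -!comp_assoc; congr (comp f0 _).
by rewrite comp_assoc e2 comp_id_l.
Qed.

Lemma Xset_closed c d (psi0 : hom c c) (sigma : hom d d) (f0 f : hom c d) :
  f0 \in Xset psi0 sigma -> f \in orb f0 -> f \in Xset psi0 sigma.
Proof.
rewrite !inE => /existsP [psi /andP[/existsP [k /andP[_ /eqP ek]] /eqP ef]].
case/orbitP=> g ->; have [g' [e1 e2]] := isobP (isoC g).
apply/existsP; exists (comp g' (comp psi g)); apply/andP; split.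
  apply/existsP; exists (comp g' k); rewrite isoC /=; apply/eqP.
  by rewrite -!comp_assoc (comp_assoc g g') e2 comp_id_l ek.
apply/eqP; rewrite comp_assoc ef -!comp_assoc; congr (comp f0 _).
by rewrite !comp_assoc e2 comp_id_l.
Qed.

Lemma card_orbit c d (f0 : hom c d) : #|orb f0| = #|hom c c|.
Proof.
rewrite /Defs.orbit card_in_imset; last by move=> x y _ _; apply: monoC.
by apply: eq_card => g; rewrite !inE isoC.
Qed.

Lemma Xcard_orbit c d (psi0 : hom c c) (sigma : hom d d) :
  #|Xset psi0 sigma| = (binomX psi0 sigma * #|hom c c|)%N.
Proof.
have -> : binomX psi0 sigma = #|orb @: Xset psi0 sigma|.
  rewrite /binomX; apply: eq_card => O.
  by apply/imsetP/imsetP => -[f hf ->]; exists f => //; move: hf; rewrite !inE.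
rewrite -sum_nat_const -sum1_card (partition_big_imset orb).
apply: eq_bigr => O /imsetP [f0 hf0 ->].
rewrite (eq_bigl (fun f => f \in orb f0)); first by rewrite sum1_card card_orbit.
move=> f /=; apply/andP/idP => [[_ /eqP <-]|hf]; first exact: orbit_self.
by rewrite (orbit_eq hf) eqxx (Xset_closed hf0 hf).
Qed.

Lemma binomN c d (psi0 : hom c c) (sigma : hom d d) :
  (binomX psi0 sigma * #|hom c c|)%N =
  (#|[set psi | in_class psi0 psi]| * #|Nset psi0 sigma|)%N.
Proof. by rewrite -Xcard_orbit Xcard_class. Qed.

End Basics.

Section Prod.
Variable C : Cat.
Local Notation hom := (@Defs.hom C).
Local Notation ob := (@Defs.ob C).
Local Notation comp := (@Defs.comp C _ _ _).
Local Notation idm := (@Defs.idm C).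
Hypothesis monoC : forall c d (f : hom c d), mono f.
Hypothesis isoC : forall d (f : hom d d), isob f.
Hypothesis pbC : forall c1 c2 d (g1 : hom c1 d) (g2 : hom c2 d),
      exists p (f1 : hom p c1) (f2 : hom p c2), is_pullback f1 f2 g1 g2.
Hypothesis poC : forall p c1 c2 (f1 : hom p c1) (f2 : hom p c2),
      exists d (g1 : hom c1 d) (g2 : hom c2 d), is_weak_pushout f1 f2 g1 g2.
Variables (c1 c2 : ob) (n : nat) (e : 'I_n -> ob).
Hypothesis he : forall c, ob_le c c1 -> exists i, ob_iso c (e i).
Variables (psi1 : hom c1 c1) (psi2 : hom c2 c2).

Definition S := {k : 'I_n & (hom (e k) c1 * hom (e k) c2)%type}.
Definition q1 (s : S) : hom (e (tag s)) c1 := (tagged s).1.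
Definition q2 (s : S) : hom (e (tag s)) c2 := (tagged s).2.

Lemma wp_choice (s : S) :
  {w : ob & {g : (hom c1 w * hom c2 w)%type | is_weak_pushout (q1 s) (q2 s) g.1 g.2}}.
Proof.
have H : exists w, exists g : (hom c1 w * hom c2 w)%type,
    is_weak_pushout (q1 s) (q2 s) g.1 g.2.
  have [w [g1 [g2 h]]] := poC (q1 s) (q2 s).
  by exists w; exists (g1, g2).
have [w0 hw] := constructive_indefinite_description _ H.
exists w0; exact: constructive_indefinite_description.
Qed.

Definition w (s : S) : ob := projT1 (wp_choice s).
Definition g1 (s : S) : hom c1 (w s) := (proj1_sig (projT2 (wp_choice s))).1.
Definition g2 (s : S) : hom c2 (w s) := (proj1_sig (projT2 (wp_choice s))).2.
Lemma wpS (s : S) : is_weak_pushout (q1 s) (q2 s) (g1 s) (g2 s).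
Proof. exact: (proj2_sig (projT2 (wp_choice s))). Qed.

Definition Spb d (f1 : hom c1 d) (f2 : hom c2 d) : {set S} :=
  [set s | asb (is_pullback (q1 s) (q2 s) f1 f2)].
Definition ms (s : S) : nat := #|Spb (g1 s) (g2 s)|.


Lemma Spb_eq s d (f1 : hom c1 d) (f2 : hom c2 d) :
  s \in Spb f1 f2 -> Spb (g1 s) (g2 s) = Spb f1 f2.
Proof.
rewrite inE => /asbP hs.
have [h [eh1 eh2 _]] := (wpS s).2 _ _ _ hs.
apply/setP=> s'; rewrite !inE; apply/asbP/asbP; rewrite -eh1 -eh2.
  by apply: pbm1.
by apply: pbm2.
Qed.

Lemma Spb_nonempty d (f1 : hom c1 d) (f2 : hom c2 d) : (0 < #|Spb f1 f2|)%N.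
Proof.
have [p [r1 [r2 hp]]] := pbC f1 f2.
have [k [j hj]] := he (inhabits r1).
have [j' [e1 e2]] := isobP hj.
apply/card_gt0P; exists (existT _ k (comp r1 j', comp r2 j')).
rewrite inE; apply/asbP; exact: (pb_iso monoC e1 hp).
Qed.

Local Open Scope ring_scope.

Lemma sum_Spb d (f1 : hom c1 d) (f2 : hom c2 d) :
  \sum_(s in Spb f1 f2) ((ms s)%:R : CC)^-1 = 1.
Proof.
rewrite (eq_bigr (fun _ => ((#|Spb f1 f2|)%:R : CC)^-1)); last first.
  by move=> s hs; rewrite /ms (Spb_eq hs).
rewrite sumr_const -(mulr_natr ((#|Spb f1 f2|)%:R)^-1) mulVf // pnatr_eq0 -lt0n.
exact: Spb_nonempty.
Qed.


Definition Hset (s : S) d (sigma : hom d d) : {set hom (w s) d} :=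
  [set h | (comp sigma (comp h (g1 s)) == comp (comp h (g1 s)) psi1) &&
           (comp sigma (comp h (g2 s)) == comp (comp h (g2 s)) psi2)].
Definition Tset (s : S) : {set hom (w s) (w s)} :=
  [set tau | (comp tau (g1 s) == comp (g1 s) psi1) &&
             (comp tau (g2 s) == comp (g2 s) psi2)].

Lemma tau_exists (s : S) d (sigma : hom d d) h : h \in Hset s sigma ->
  exists tau, tau \in Tset s /\ comp sigma h = comp h tau.
Proof.
rewrite inE => /andP[/eqP E1 /eqP E2].
have pbs := (wpS s).1.
have P1 := pbm1 monoC h pbs.
have P2 := pbm1 monoC sigma P1.
have P3 : is_pullback (q1 s) (q2 s) (comp (g1 s) psi1) (comp (g2 s) psi2).
  apply: (pbm2 monoC (m:=h)); rewrite !comp_assoc -E1 -E2; exact: P2.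
have [tau [t1 t2 _]] := (wpS s).2 _ _ _ P3.
exists tau; split; first by rewrite inE t1 t2 !eqxx.
have [u [u1 u2 uu]] := (wpS s).2 _ _ _ P2.
rewrite (uu (comp sigma h)); try by rewrite comp_assoc.
symmetry; apply: uu.
  by rewrite -comp_assoc t1 comp_assoc E1.
by rewrite -comp_assoc t2 comp_assoc E2.
Qed.

Lemma Hcard (s : S) d (sigma : hom d d) :
  #|Hset s sigma| = (\sum_(tau in Tset s) #|Nset tau sigma|)%N.
Proof.
transitivity (\sum_(tau : hom (w s) (w s)) \sum_(h : hom (w s) d)
   ((tau \in Tset s) && (h \in Nset tau sigma) : nat))%N; last first.
  symmetry; rewrite big_mkcond /=; apply: eq_bigr => tau _.
  rewrite card_sumb; case: ifP => h.
    by apply: eq_bigr => f _.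
  by rewrite big1.
rewrite exchange_big card_sumb /=; apply: eq_bigr => h _.
case: (boolP (h \in Hset s sigma)) => hH.
  have [tau0 [ht0 et0]] := tau_exists hH.
  rewrite (bigD1 tau0) //= ht0 inE et0 eqxx /=.
  rewrite big1 ?addn0 // => tau hne; case: andP => // -[_].
  rewrite inE et0 => /eqP /monoC e'; by rewrite e' eqxx in hne.
rewrite big1 // => tau _; case: andP => // -[]; rewrite !inE.
case/andP=> /eqP t1 /eqP t2 /eqP et; case/negP: hH.
by rewrite inE !comp_assoc et -!comp_assoc t1 t2 !eqxx.
Qed.


Definition Pairs d (sigma : hom d d) : {set (hom c1 d * hom c2 d)%type} :=
  setX (Nset psi1 sigma) (Nset psi2 sigma).

Lemma PairsS (s : S) d (sigma : hom d d) :
  #|[set p in Pairs sigma | s \in Spb p.1 p.2]| = #|Hset s sigma|.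
Proof.
have pbs := (wpS s).1.
have -> : [set p in Pairs sigma | s \in Spb p.1 p.2] =
    (fun h => (comp h (g1 s), comp h (g2 s))) @: Hset s sigma.
  apply/setP=> -[f1 f2]; rewrite !inE /=; apply/idP/imsetP.
    case/andP=> /andP[/eqP E1 /eqP E2] /asbP hp.
    have [h [h1 h2 _]] := (wpS s).2 _ _ _ hp.
    exists h; last by rewrite h1 h2.
    by rewrite inE h1 h2 E1 E2 !eqxx.
  case=> h; rewrite inE => /andP[/eqP E1 /eqP E2] [-> ->].
  rewrite E1 E2 !eqxx /=; apply/asbP; exact: pbm1.
rewrite card_in_imset // => h h' _ _ [e1 e2].
have [u [_ _ uu]] := (wpS s).2 _ _ _ (pbm1 monoC h pbs).
by rewrite (uu h) // (uu h') // -?e1 -?e2.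
Qed.

Local Open Scope ring_scope.

Lemma prod_N d (sigma : hom d d) :
  ((#|Nset psi1 sigma|)%:R * (#|Nset psi2 sigma|)%:R : CC) =
  \sum_(s : S) ((ms s)%:R)^-1 * (\sum_(tau in Tset s) (#|Nset tau sigma|)%:R).
Proof.
rewrite -natrM -cardsX -/(Pairs sigma).
have -> : ((#|Pairs sigma|)%:R : CC) = \sum_(p in Pairs sigma) 1.
  by rewrite sumr_const.
rewrite (eq_bigr (fun p => \sum_(s in Spb p.1 p.2) ((ms s)%:R : CC)^-1)); last first.
  by move=> p _; rewrite sum_Spb.
transitivity (\sum_p \sum_(s : S)
   (if (p \in Pairs sigma) && (s \in Spb p.1 p.2) then ((ms s)%:R : CC)^-1 else 0)).
  rewrite big_mkcond /=; apply: eq_bigr => p _; case: ifP => hp.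
    by rewrite big_mkcond.
  by rewrite big1.
rewrite exchange_big /=; apply: eq_bigr => s _.
rewrite -big_mkcond /= sumr_const -natr_sum -Hcard -PairsS.
rewrite mulr_natr; congr (_ *+ _); apply: eq_card => p; by rewrite unfold_in /= !inE.
Qed.

End Prod.

Section CP.
Variable C : Cat.
Local Notation hom := (@Defs.hom C).
Local Notation ob := (@Defs.ob C).
Local Notation comp := (@Defs.comp C _ _ _).
Local Notation idm := (@Defs.idm C).
Local Open Scope ring_scope.

Lemma cpwE (ok : ob -> Prop) (P : cfam C) :
  char_poly_with ok P <->
  exists n (a : 'I_n -> CC) (X : 'I_n -> {c : ob & hom c c}),
    [/\ forall i, isob (projT2 (X i)),
        forall i, a i != 0 -> ok (projT1 (X i)) &
        forall d (sigma : hom d d), isob sigma ->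
          P d sigma = \sum_(i < n) a i * (binomX (projT2 (X i)) sigma)%:R].
Proof.
split.
  case=> n [a [cs [psi [h1 h2 h3]]]].
  by exists n, a, (fun i => existT _ (cs i) (psi i)); split.
case=> n [a [X [h1 h2 h3]]].
by exists n, a, (fun i => projT1 (X i)), (fun i => projT2 (X i)); split.
Qed.

Lemma cp_ext (ok : ob -> Prop) (P Q : cfam C) : char_poly_with ok P ->
  (forall d (sigma : hom d d), isob sigma -> Q d sigma = P d sigma) ->
  char_poly_with ok Q.
Proof.
case=> n [a [cs [psi [h1 h2 h3]]]] hPQ.
exists n, a, cs, psi; split=> // d sigma hs; rewrite hPQ //; exact: h3.
Qed.

Lemma cp0 (ok : ob -> Prop) : char_poly_with ok (fun _ _ => 0).
Proof.
apply/cpwE; have X0 : 'I_0 -> {c : ob & hom c c} by case.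
exists 0%N, (fun _ => 0), X0; split; try by case.
by move=> d sigma _; rewrite big_ord0.
Qed.

Lemma splitl n m (i : 'I_n) : split (lshift m i) = inl i.
Proof. exact: (unsplitK (inl i)). Qed.
Lemma splitr n m (i : 'I_m) : split (rshift n i) = inr i.
Proof. exact: (unsplitK (inr i)). Qed.

Lemma cp_add (ok : ob -> Prop) (P Q : cfam C) : char_poly_with ok P -> char_poly_with ok Q ->
  char_poly_with ok (fun d sigma => P d sigma + Q d sigma).
Proof.
move=> /cpwE [n [a [X [h1 h2 h3]]]] /cpwE [m [b [Y [h1' h2' h3']]]].
apply/cpwE.
exists (n + m)%N, (fun i => match split i with inl i => a i | inr j => b j end),
  (fun i => match split i with inl i => X i | inr j => Y j end); split.
- by move=> i; case: split.
- by move=> i; case: split => j; [apply: h2 | apply: h2'].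
- move=> d sigma hs; rewrite h3 // h3' // big_split_ord /=.
  by congr (_ + _); apply: eq_bigr => i _; rewrite ?splitl ?splitr.
Qed.

Lemma cp_scale (ok ok' : ob -> Prop) (k : CC) (P : cfam C) : char_poly_with ok' P ->
  (k != 0 -> forall c, ok' c -> ok c) ->
  char_poly_with ok (fun d sigma => k * P d sigma).
Proof.
case=> n [a [cs [psi [h1 h2 h3]]]] hk.
exists n, (fun i => k * a i), cs, psi; split=> //.
  by move=> i; rewrite mulf_eq0 negb_or => /andP[hk0 ha]; apply: hk => //; apply: h2.
by move=> d sigma hs; rewrite h3 // big_distrr /=; apply: eq_bigr => i _; rewrite mulrA.
Qed.

Lemma cp_sum (ok : ob -> Prop) (I : finType) (A : pred I) (F : I -> cfam C) :
  (forall i, char_poly_with ok (F i)) ->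
  char_poly_with ok (fun d sigma => \sum_(i in A) F i d sigma).
Proof.
move=> hF.
suff H : forall r : seq I,
    char_poly_with ok (fun d sigma => \sum_(i <- r | i \in A) F i d sigma).
  by apply: cp_ext (H (index_enum I)) _.
elim=> [|i r IH].
  by apply: cp_ext (cp0 ok) _ => d sigma _; rewrite big_nil.
case hi: (i \in A).
  apply: cp_ext (cp_add (hF i) IH) _ => d sigma _; by rewrite big_cons hi.
by apply: cp_ext IH _ => d sigma _; rewrite big_cons hi.
Qed.

Lemma cp_binom (ok : ob -> Prop) c (psi : hom c c) : isob psi -> ok c ->
  char_poly_with ok (fun d sigma => (binomX psi sigma)%:R).
Proof.
move=> hpsi hc; apply/cpwE.
exists 1%N, (fun _ => 1), (fun _ => existT _ c psi); split=> //.
by move=> d sigma _; rewrite big_ord1 mul1r.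
Qed.

End CP.

Section Final.
Variable C : Cat.
Local Notation hom := (@Defs.hom C).
Local Notation ob := (@Defs.ob C).
Local Notation comp := (@Defs.comp C _ _ _).
Local Notation idm := (@Defs.idm C).
Hypothesis monoC : forall c d (f : hom c d), mono f.
Hypothesis isoC : forall d (f : hom d d), isob f.
Hypothesis pbC : forall c1 c2 d (g1 : hom c1 d) (g2 : hom c2 d),
      exists p (f1 : hom p c1) (f2 : hom p c2), is_pullback f1 f2 g1 g2.
Hypothesis poC : forall p c1 c2 (f1 : hom p c1) (f2 : hom p c2),
      exists d (g1 : hom c1 d) (g2 : hom c2 d), is_weak_pushout f1 f2 g1 g2.
Hypothesis h4 : forall d, exists n (e : 'I_n -> ob),
      forall c, ob_le c d -> exists i, ob_iso c (e i).
Local Open Scope ring_scope.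

Lemma in_class_refl c (psi : hom c c) : in_class psi psi.
Proof.
apply/existsP; exists (idm c); rewrite isob_idm /=.
by rewrite comp_id_l comp_id_r.
Qed.

Lemma binom_as_N c d (psi : hom c c) (sigma : hom d d) :
  ((binomX psi sigma)%:R : CC) =
  (#|[set x | in_class psi x]|)%:R / (#|hom c c|)%:R * (#|Nset psi sigma|)%:R.
Proof.
have hG : ((#|hom c c|)%:R : CC) != 0.
  by rewrite pnatr_eq0 -lt0n; apply/card_gt0P; exists (idm c).
by rewrite mulrAC -natrM -(binomN monoC isoC) natrM -mulrA mulfV // mulr1.
Qed.

Lemma cp_N (ok : ob -> Prop) c (psi : hom c c) : ok c ->
  char_poly_with ok (fun d sigma => (#|Nset psi sigma|)%:R).
Proof.
move=> hc.
have hM : ((#|[set x | in_class psi x]|)%:R : CC) != 0.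
  by rewrite pnatr_eq0 -lt0n; apply/card_gt0P; exists psi; rewrite inE in_class_refl.
apply: cp_ext (cp_scale (k := (#|hom c c|)%:R / (#|[set x | in_class psi x]|)%:R)
                 (cp_binom (isoC psi) hc) _) _ => //.
move=> d sigma _; rewrite binom_as_N mulrA -[LHS]mul1r; congr (_ * _); symmetry.
rewrite mulrA divfK // mulfV //.
by rewrite pnatr_eq0 -lt0n; apply/card_gt0P; exists (idm c).
Qed.

Definition okp (c1 c2 w : ob) : Prop :=
  exists p (f1 : hom p c1) (f2 : hom p c2) (g1 : hom c1 w) (g2 : hom c2 w),
    is_weak_pushout f1 f2 g1 g2.

Lemma prodB c1 c2 (psi1 : hom c1 c1) (psi2 : hom c2 c2) :
  char_poly_with (okp c1 c2)
    (fun d sigma => (binomX psi1 sigma)%:R * (binomX psi2 sigma)%:R).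
Proof.
have [n [e he]] := h4 c1.
set k1 := (#|[set x | in_class psi1 x]|)%:R / ((#|hom c1 c1|)%:R : CC).
set k2 := (#|[set x | in_class psi2 x]|)%:R / ((#|hom c2 c2|)%:R : CC).
have H : char_poly_with (okp c1 c2) (fun d (sigma : hom d d) => k1 * k2 *
    \sum_(s : S c1 c2 e) ((ms poC s)%:R)^-1 *
       (\sum_(tau in Tset poC psi1 psi2 s) (#|Nset tau sigma|)%:R)).
  apply: (cp_scale (ok' := okp c1 c2)) => //.
  apply: cp_sum => s; apply: (cp_scale (ok' := okp c1 c2)) => //.
  apply: cp_sum => tau; apply: cp_N.
  by exists (e (tag s)), (q1 s), (q2 s), (g1 poC s), (g2 poC s); apply: wpS.
apply: cp_ext H _ => d sigma _.
rewrite -(prod_N monoC pbC poC he) !binom_as_N -/k1 -/k2.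
by rewrite mulrACA.
Qed.


Lemma wp_le c1' c2' c1 c2 d w : ob_le c1' c1 -> ob_le c2' c2 ->
  ob_ge_sum d c1 c2 -> okp c1' c2' w -> ob_le w d.
Proof.
case=> e1; case=> e2 hd [p [f1 [f2 [g1 [g2 hw]]]]].
have [w' [g1' [g2' hw']]] := poC (comp e1 f1) (comp e2 f2).
have [hd'] := hd _ _ _ _ _ _ hw'.
have P : is_pullback f1 f2 (comp g1' e1) (comp g2' e2).
  apply: (pbI monoC); first by rewrite -!comp_assoc hw'.1.1.
  move=> q h1 h2 E.
  have E' : comp g1' (comp e1 h1) = comp g2' (comp e2 h2) by rewrite !comp_assoc.
  have [h [eh1 eh2 _]] := hw'.1.2 q (comp e1 h1) (comp e2 h2) E'.
  exists h; split; [move: eh1 | move: eh2]; by rewrite -comp_assoc => /monoC.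
have [u _] := hw.2 _ _ _ P.
by constructor; exact: (comp hd' u).
Qed.

Lemma cp_mul (ok okP okQ : ob -> Prop) (P Q : cfam C) :
  char_poly_with okP P -> char_poly_with okQ Q ->
  (forall c1 c2 w, okP c1 -> okQ c2 -> okp c1 c2 w -> ok w) ->
  char_poly_with ok (cfam_mul P Q).
Proof.
case=> n [a [cs [psi [h1 h2 h3]]]] [m [b [cs' [psi' [h1' h2' h3']]]]] hok.
have H : char_poly_with ok (fun d (sigma : hom d d) =>
   \sum_(i in predT) \sum_(j in predT) (a i * b j) *
      ((binomX (psi i) sigma)%:R * (binomX (psi' j) sigma)%:R)).
  apply: cp_sum => i; apply: cp_sum => j.
  apply: (cp_scale (ok' := okp (cs i) (cs' j)) (prodB _ _)).
  rewrite mulf_eq0 negb_or => /andP[ha hb] w hw.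
  exact: hok (h2 _ ha) (h2' _ hb) hw.
apply: cp_ext H _ => d sigma hs.
rewrite /cfam_mul h3 // h3' // big_distrl /=; apply: eq_bigr => i _.
rewrite big_distrr /=; apply: eq_bigr => j _; by rewrite mulrACA.
Qed.

End Final.

Theorem mainTheorem8 (C : Cat) (HC : FI_type C) :
  (forall P Q : cfam C, is_char_poly P -> is_char_poly Q -> is_char_poly (cfam_mul P Q)) /\
  (forall (P Q : cfam C) (c1 c2 : ob C),
      deg_le P c1 -> deg_le Q c2 -> deg_le_sum (cfam_mul P Q) c1 c2).
Proof.
case: HC => monoC [isoC [_ [h4 [pbC poC]]]].
split.
  move=> P Q hP hQ; exact: (cp_mul monoC isoC pbC poC h4 hP hQ).
move=> P Q c1 c2 hP hQ d hd.
apply: (cp_mul monoC isoC pbC poC h4 hP hQ) => c1' c2' w ha hb hw.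
exact: (wp_le monoC poC ha hb hd hw).
Qed.
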